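(* Let $d, n \in \mathbb{N}$, let $\Gamma_{\mathrm{noise}} \in \mathbb{R}^{n\times n}$ be symmetric positive definite, let ${\boldsymbol{y}} \in \mathbb{R}^n$, and let $F, \hat F : \mathbb{R}^d \to \mathbb{R}^n$ be differentiable maps (the ''high-fidelity'' forward map and its surrogate). Let $r\le d$ and $\Phi \in \mathbb{R}^{d\times r}$ with $\Phi^T\Phi = I_r$, and set $P_r = \Phi\Phi^T$. Define $$L({\boldsymbol{\eta}}) = \tfrac12 \|{\boldsymbol{y}} - F({\boldsymbol{\eta}})\|^2_{\Gamma_{\mathrm{noise}}^{-1}} + \tfrac12\|{\boldsymbol{\eta}}\|^2,\qquad \hat L({\boldsymbol{\eta}}) = \tfrac12 \|{\boldsymbol{y}} - \hat F({\boldsymbol{\eta}})\|^2_{\Gamma_{\mathrm{noise}}^{-1}} + \tfrac12\|\Phi^T{\boldsymbol{\eta}}\|^2,$$ where $\|{\boldsymbol{v}}\|^2_{A} = {\boldsymbol{v}}^TA{\boldsymbol{v}}$. Let ${\boldsymbol{\eta}}^*, \hat{\boldsymbol{\eta}}^* \in \mathbb{R}^d$ be stationary points, $\nabla L({\boldsymbol{\eta}}^* ) = 0$ and $\nabla \hat L(\hat{\boldsymbol{\eta}}^* ) = 0$, i.e. $$ -\nabla F({\boldsymbol{\eta}}^* )^T\Gamma_{\mathrm{noise}}^{-1}({\boldsymbol{y}}-F({\boldsymbol{\eta}}^* )) + {\boldsymbol{\eta}}^* = 0,\qquad -\nabla \hat F(\hat{\boldsymbol{\eta}}^* )^T\Gamma_{\mathrm{noise}}^{-1}({\boldsymbol{y}}-\hat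 F(\hat{\boldsymbol{\eta}}^* )) + P_r\hat{\boldsymbol{\eta}}^* = 0,$$ and assume $\hat{\boldsymbol{\eta}}^*$ lies in the range of $\Phi$, i.e. $P_r\hat{\boldsymbol{\eta}}^* = \hat{\boldsymbol{\eta}}^*$. Suppose there is a radius $R>0$ such that: (A1) $L$ and $\hat L$ are twice differentiable at ${\boldsymbol{\eta}}^*$ and $\hat{\boldsymbol{\eta}}^*$ respectively, and there exist matrix-valued functions $\delta, \hat\delta$ with values in $\mathbb{R}^{d\times d}$, $\lim_{{\boldsymbol{\eta}}\to{\boldsymbol{\eta}}^*}\|\delta({\boldsymbol{\eta}})\| = 0$, $\lim_{{\boldsymbol{\eta}}\to\hat{\boldsymbol{\eta}}^*}\|\hat\delta({\boldsymbol{\eta}})\|=0$, such that $\nabla L({\boldsymbol{\eta}}) = \nabla L({\boldsymbol{\eta}}^* ) + \nabla^2 L({\boldsymbol{\eta}}^* )({\boldsymbol{\eta}}-{\boldsymbol{\eta}}^* ) + \delta({\boldsymbol{\eta}})({\boldsymbol{\eta}}-{\boldsymbol{\eta}}^* )$ whenever $\|{\boldsymbol{\eta}}-{\boldsymbol{\eta}}^*\|\le R$, and $\nabla \hat L({\boldsymbol{\eta}}) = \nabla \hat L(\hat{\boldsymbol{\eta}}^* ) + \nabla^2 \hat L(\hat{\boldsymbol{\eta}}^* )({\boldsymbol{\eta}}-\hat{\boldsymbol{\eta}}^* ) + \hat\delta({\boldsymbol{\eta}})({\boldsymbol{\eta}}-\hat{\boldsymbol{\eta}}^* )$ whenever $\|{\boldsymbol{\eta}}-\hat{\boldsymbol{\eta}}^*\|\le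 R$; moreover, for some constant $c_h>0$, $$\big\|(\nabla^2\hat L(\hat{\boldsymbol{\eta}}^* ) + \nabla^2 L({\boldsymbol{\eta}}^* ))({\boldsymbol{\eta}}^*-\hat{\boldsymbol{\eta}}^* ) + (\hat\delta({\boldsymbol{\eta}}^* )+\delta(\hat{\boldsymbol{\eta}}^* ))({\boldsymbol{\eta}}^*-\hat{\boldsymbol{\eta}}^* )\big\| \ge c_h\|{\boldsymbol{\eta}}^*-\hat{\boldsymbol{\eta}}^*\|.$$ (A2) There are constants $\varepsilon_1,\varepsilon_2>0$ with $\|F({\boldsymbol{\eta}}) - \hat F({\boldsymbol{\eta}})\| \le \varepsilon_1$ and $\|\nabla F({\boldsymbol{\eta}}) - \nabla\hat F({\boldsymbol{\eta}})\|\le\varepsilon_2$ for all ${\boldsymbol{\eta}}$ with $\|{\boldsymbol{\eta}}-{\boldsymbol{\eta}}^*\|\le R$ or $\|{\boldsymbol{\eta}}-\hat{\boldsymbol{\eta}}^*\|\le R$ (in particular at ${\boldsymbol{\eta}}^*$ and $\hat{\boldsymbol{\eta}}^*$). (A3) There is a constant $\varepsilon_3>0$ with $\|(I-P_r){\boldsymbol{\eta}}^*\|\le\varepsilon_3$. If $\|{\boldsymbol{\eta}}^*-\hat{\boldsymbol{\eta}}^*\|\le R$, then $$\|{\boldsymbol{\eta}}^*-\hat{\boldsymbol{\eta}}^*\| \le c_1\varepsilon_1 + c_2\varepsilon_2 + c_3\varepsilon_3 =: \varepsilon_{\boldsymbol{m}},$$ with $c_1 = \|\Gamma_{\mathrm{noise}}^{-1}\|\big(\|\nabla\hat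 F({\boldsymbol{\eta}}^* )\| + \|\nabla F(\hat{\boldsymbol{\eta}}^* )\|\big)/c_h$, $c_2 = \|\Gamma_{\mathrm{noise}}^{-1}\|\big(2\|{\boldsymbol{y}}\| + \|F({\boldsymbol{\eta}}^* )\| + \|\hat F(\hat{\boldsymbol{\eta}}^* )\|\big)/c_h$, $c_3 = 1/c_h$, which are independent of $\varepsilon_1,\varepsilon_2,\varepsilon_3$.
   Context: Norms: $\|\cdot\|$ denotes the Euclidean norm for vectors and the Frobenius norm for matrices. $\nabla F({\boldsymbol{\eta}})\in\mathbb{R}^{n\times d}$ denotes the Jacobian. Interpretation (not needed for the statement): ${\boldsymbol{\eta}}$ is the whitened parameter, ${\boldsymbol{m}} = {\boldsymbol{m}}_{\mathrm{prior}} + \Gamma_{\mathrm{prior}}^{1/2}{\boldsymbol{\eta}}$, $L$ is the negative log-posterior whose minimizer is the MAP point, and $\hat L$ is its surrogate counterpart using a neural network $\hat F$ that depends on ${\boldsymbol{\eta}}$ only through $\Phi^T{\boldsymbol{\eta}}$; the bound equals $\|{\boldsymbol{m}}^*-\hat{\boldsymbol{m}}^*\|_{\Gamma_{\mathrm{prior}}^{-1}}$. *)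

(* Defs.v *)
From HB Require Import structures.
From mathcomp Require Import all_boot all_order all_algebra.
From mathcomp Require Import all_classical all_reals all_analysis.
Set Implicit Arguments. Unset Strict Implicit. Unset Printing Implicit Defensive.
Import Order.TTheory GRing.Theory Num.Theory.
Import numFieldNormedType.Exports.
Local Open Scope ring_scope.
Local Open Scope classical_set_scope.

Definition enorm {R : realType} {m k : nat} (A : 'M[R]_(m, k)) : R :=
  Num.sqrt (\sum_(i < m) \sum_(j < k) A i j ^+ 2).

Definition wnorm2 {R : realType} {m : nat} (A : 'M[R]_m) (v : 'cV[R]_m) : R :=
  (v^T *m A *m v) 0 0.

Definition jac {R : realType} {d n : nat} (f : 'cV[R]_d -> 'cV[R]_n)
  (x : 'cV[R]_d) : 'M[R]_(n, d) :=
  \matrix_(i < n, j < d) ('D_(delta_mx j 0) f x) i 0.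

Definition grad {R : realType} {d : nat} (g : 'cV[R]_d -> R)
  (x : 'cV[R]_d) : 'cV[R]_d :=
  \col_(j < d) ('D_(delta_mx j 0) g x).

Definition hess {R : realType} {d : nat} (g : 'cV[R]_d -> R)
  (x : 'cV[R]_d) : 'M[R]_d := jac (grad g) x.

Definition L_map {R : realType} {d n : nat} (Gnoise : 'M[R]_n) (y : 'cV[R]_n)
  (F : 'cV[R]_d -> 'cV[R]_n) (eta : 'cV[R]_d) : R :=
  2^-1 * wnorm2 (invmx Gnoise) (y - F eta) + 2^-1 * enorm eta ^+ 2.

Definition L_hat_map {R : realType} {d n r : nat} (Gnoise : 'M[R]_n) (y : 'cV[R]_n)
  (Fh : 'cV[R]_d -> 'cV[R]_n) (Phi : 'M[R]_(d, r)) (eta : 'cV[R]_d) : R :=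
  2^-1 * wnorm2 (invmx Gnoise) (y - Fh eta) + 2^-1 * enorm (Phi^T *m eta) ^+ 2.

(* Main.v *)
Require Import Defs.
From HB Require Import structures.
From mathcomp Require Import all_boot all_order all_algebra.
From mathcomp Require Import all_classical all_reals all_analysis.
From mathcomp Require Import ring lra.
Import Order.TTheory GRing.Theory Num.Theory.
Import numFieldNormedType.Exports.
Local Open Scope ring_scope.
Local Open Scope classical_set_scope.

Section Norms.
Variable R : realType.

Lemma cs_sum (I : finType) (a b : I -> R) :
  (\sum_i a i * b i) ^+ 2 <= (\sum_i a i ^+ 2) * (\sum_i b i ^+ 2).
Proof.
have H0 : 0 <= \sum_i \sum_j (a i * b j - a j * b i) ^+ 2.
  by apply: sumr_ge0 => i _; apply: sumr_ge0 => j _; apply: sqr_ge0.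
have E : \sum_i \sum_j (a i * b j - a j * b i) ^+ 2 =
   2 * ((\sum_i a i ^+ 2) * (\sum_i b i ^+ 2) - (\sum_i a i * b i) ^+ 2).
  have E1 : forall i j, (a i * b j - a j * b i) ^+ 2 =
     a i ^+ 2 * b j ^+ 2 + a j ^+ 2 * b i ^+ 2 - 2 * ((a i * b i) * (a j * b j)).
    by move=> i j; ring.
  transitivity (\sum_i \sum_j (a i ^+ 2 * b j ^+ 2 + a j ^+ 2 * b i ^+ 2
     - 2 * ((a i * b i) * (a j * b j)))).
    by apply: eq_bigr => i _; apply: eq_bigr => j _; exact: E1.
  under eq_bigr => i _ do rewrite sumrB big_split /=.
  rewrite sumrB big_split /=.
  have -> : \sum_i \sum_j 2 * ((a i * b i) * (a j * b j)) =
            2 * (\sum_i a i * b i) ^+ 2.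
    rewrite expr2 mulr_suml mulr_sumr; apply: eq_bigr => i _.
    rewrite !mulr_sumr; apply: eq_bigr => j _; ring.
  have -> : \sum_i \sum_j a i ^+ 2 * b j ^+ 2 =
            (\sum_i a i ^+ 2) * (\sum_i b i ^+ 2).
    rewrite mulr_suml; apply: eq_bigr => i _; by rewrite mulr_sumr.
  have -> : \sum_i \sum_j a j ^+ 2 * b i ^+ 2 =
            (\sum_i a i ^+ 2) * (\sum_i b i ^+ 2).
    rewrite mulrC mulr_suml; apply: eq_bigr => i _; rewrite mulr_sumr.
    by apply: eq_bigr => j _; rewrite mulrC.
  ring.
rewrite E in H0; rewrite -subr_ge0; move: H0; rewrite pmulr_rge0 //.
Qed.

Lemma enorm_ge0 m k (A : 'M[R]_(m, k)) : 0 <= enorm A.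
Proof. exact: sqrtr_ge0. Qed.

Lemma enormE2 m k (A : 'M[R]_(m, k)) :
  enorm A ^+ 2 = \sum_i \sum_j A i j ^+ 2.
Proof.
rewrite sqr_sqrtr //; apply: sumr_ge0 => i _; apply: sumr_ge0 => j _.
exact: sqr_ge0.
Qed.

Lemma sqrt_le_prod (c a b : R) : 0 <= a -> 0 <= b -> c ^+ 2 <= a * b ->
  c <= Num.sqrt a * Num.sqrt b.
Proof.
move=> a0 b0 h; rewrite -sqrtrM //.
apply: le_trans (ler_norm c) _.
by rewrite -sqrtr_sqr ler_wsqrtr.
Qed.

Lemma le_sqrt_sq (s e : R) : 0 <= e -> s <= e ^+ 2 -> Num.sqrt s <= e.
Proof.
move=> e0 h; apply: le_trans (ler_wsqrtr h) _.
by rewrite sqrtr_sqr ger0_norm.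
Qed.

Lemma enormD m k (A B : 'M[R]_(m, k)) : enorm (A + B) <= enorm A + enorm B.
Proof.
apply: le_sqrt_sq; first by rewrite addr_ge0 ?enorm_ge0.
have cs : (\sum_i \sum_j A i j * B i j) <= enorm A * enorm B.
  apply: sqrt_le_prod; try (apply: sumr_ge0 => i _; apply: sumr_ge0 => j _; exact: sqr_ge0).
  rewrite !pair_bigA /=.
  exact: (@cs_sum _ (fun p => A p.1 p.2) (fun p => B p.1 p.2)).
have -> : \sum_i \sum_j (A + B) i j ^+ 2 =
   enorm A ^+ 2 + enorm B ^+ 2 + 2 * \sum_i \sum_j A i j * B i j.
  rewrite !enormE2 -big_split /= mulr_sumr -big_split /=; apply: eq_bigr => i _.
  rewrite -big_split /= mulr_sumr -big_split /=; apply: eq_bigr => j _.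
  rewrite mxE; ring.
rewrite sqrrD; lra.
Qed.

Lemma enormN m k (A : 'M[R]_(m, k)) : enorm (- A) = enorm A.
Proof.
rewrite /enorm; congr Num.sqrt; apply: eq_bigr => i _; apply: eq_bigr => j _.
by rewrite mxE sqrrN.
Qed.

Lemma enormB m k (A B : 'M[R]_(m, k)) : enorm (A - B) = enorm (B - A).
Proof. by rewrite -enormN opprB. Qed.

Lemma enormBle m k (A B : 'M[R]_(m, k)) : enorm (A - B) <= enorm A + enorm B.
Proof. by rewrite -[X in _ <= _ + X]enormN; apply: enormD. Qed.

Lemma enorm_tr m k (A : 'M[R]_(m, k)) : enorm A^T = enorm A.
Proof.
rewrite /enorm exchange_big; congr Num.sqrt; apply: eq_bigr => i _.
by apply: eq_bigr => j _; rewrite mxE.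
Qed.

Lemma enormM m k p (A : 'M[R]_(m, k)) (B : 'M[R]_(k, p)) :
  enorm (A *m B) <= enorm A * enorm B.
Proof.
have a0 : 0 <= \sum_i \sum_j A i j ^+ 2.
  by apply: sumr_ge0 => i _; apply: sumr_ge0 => j _; exact: sqr_ge0.
have b0 : 0 <= \sum_i \sum_j B i j ^+ 2.
  by apply: sumr_ge0 => i _; apply: sumr_ge0 => j _; exact: sqr_ge0.
rewrite /enorm -sqrtrM // ler_wsqrtr //.
rewrite [X in _ <= _ * X]exchange_big /= mulr_suml; apply: ler_sum => i _.
rewrite mulr_sumr; apply: ler_sum => l _; rewrite mxE.
exact: cs_sum.
Qed.

Lemma enormZ m k (c : R) (A : 'M[R]_(m, k)) : enorm (c *: A) = `|c| * enorm A.
Proof.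
rewrite /enorm -sqrtr_sqr -sqrtrM ?sqr_ge0 //; congr Num.sqrt.
rewrite mulr_sumr; apply: eq_bigr => i _; rewrite mulr_sumr; apply: eq_bigr => j _.
by rewrite mxE exprMn.
Qed.

End Norms.

Section Der.
Variables (R : realType) (d : nat).
Implicit Types (x v : 'cV[R]_d).

Lemma dcoord m (w : 'cV[R]_d -> 'cV[R]_m) x v i :
  differentiable w x ->
  derivable (fun z => w z i 0) x v /\ 'D_v (fun z => w z i 0) x = ('D_v w x) i 0.
Proof.
move=> dw; have dv : derivable w x v by exact: diff_derivable.
split; first exact: ((derivable_mxP _ _ _).1 dv i 0).
by rewrite (derive_mx dv) mxE.
Qed.

Arguments dcoord {m w x} v i.

Lemma dlin m (w : 'cV[R]_d -> 'cV[R]_m) x v (c : 'I_m -> R) :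
  differentiable w x ->
  derivable (fun z => \sum_i w z i 0 * c i) x v /\
  'D_v (fun z => \sum_i w z i 0 * c i) x = \sum_i ('D_v w x) i 0 * c i.
Proof.
move=> dw.
have E : (fun z => \sum_i w z i 0 * c i) =
         \sum_i ((fun z => w z i 0) * cst (c i)).
  by rewrite funeqE => z; rewrite fct_sumE.
have Di : forall i, derivable ((fun z => w z i 0) * cst (c i)) x v.
  by move=> i; apply: derivableM; [exact: (dcoord v i dw).1|exact: derivable_cst].
rewrite E; split; first exact: derivable_sum.
rewrite derive_sum //; apply: eq_bigr => i _.
rewrite deriveM; [|exact: (dcoord v i dw).1|exact: derivable_cst].
rewrite derive_cst (dcoord v i dw).2 /=.
by rewrite scaler0 add0r mulrC.
Qed.

Arguments dlin {m w x} v c.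

Lemma dquad m (M : 'M[R]_m) (w : 'cV[R]_d -> 'cV[R]_m) x v :
  M^T = M -> differentiable w x ->
  derivable (fun z => wnorm2 M (w z)) x v /\
  'D_v (fun z => wnorm2 M (w z)) x = 2 * ((('D_v w x)^T *m M *m w x) 0 0).
Proof.
move=> MT dw.
have E : (fun z => wnorm2 M (w z)) =
   \sum_k ((fun z => \sum_i w z i 0 * M i k) * (fun z => w z k 0)).
  rewrite funeqE => z; rewrite fct_sumE /wnorm2 mxE; apply: eq_bigr => k _.
  by rewrite mxE /=; congr (_ * _); apply: eq_bigr => i _; rewrite mxE.
have Dk : forall k, derivable
   ((fun z => \sum_i w z i 0 * M i k) * (fun z => w z k 0)) x v.
  by move=> k; apply: derivableM; [exact: (dlin v (fun i => M i k) dw).1|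
                                   exact: (dcoord v k dw).1].
rewrite E; split; first exact: derivable_sum.
rewrite derive_sum //.
set D := 'D_v w x.
have Fk : forall k, 'D_v ((fun z => \sum_i w z i 0 * M i k) * (fun z => w z k 0)) x
   = (\sum_i w x i 0 * M i k) * D k 0 + w x k 0 * \sum_i D i 0 * M i k.
  move=> k; rewrite deriveM; [|exact: (dlin v (fun i => M i k) dw).1|
                                exact: (dcoord v k dw).1].
  by rewrite (dlin v (fun i => M i k) dw).2 (dcoord v k dw).2.
rewrite (eq_bigr _ (fun k _ => Fk k)) big_split /=.
have Ms : forall a b, M a b = M b a by move=> a b; rewrite -{1}MT mxE.
have R0 : (D^T *m M *m w x) 0 0 = \sum_a \sum_b D b 0 * M b a * w x a 0.
  rewrite mxE; apply: eq_bigr => a _; rewrite mxE mulr_suml.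
  by apply: eq_bigr => b _; rewrite mxE.
rewrite R0 mulr2n mulrDl mul1r; congr (_ + _).
  under eq_bigr do rewrite mulr_suml.
  rewrite exchange_big /=; apply: eq_bigr => a _; apply: eq_bigr => b _.
  by rewrite Ms; ring.
apply: eq_bigr => a _; rewrite mulr_sumr; apply: eq_bigr => b _; ring.
Qed.

Arguments dquad {m M w x} v.

Lemma Jcol n (f : 'cV[R]_d -> 'cV[R]_n) x j (B : 'M[R]_n) (u : 'cV[R]_n) :
  differentiable f x ->
  (('D_(delta_mx j 0) f x)^T *m B *m u) 0 0 = ((jac f x)^T *m B *m u) j 0.
Proof.
move=> df; rewrite !mxE; apply: eq_bigr => a _; rewrite !mxE; congr (_ * _).
apply: eq_bigr => b _; rewrite !mxE; congr (_ * _).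
Qed.

Lemma dxq (M : 'M[R]_d) x j : (((delta_mx j 0 : 'cV[R]_d))^T *m M *m x) 0 0 = (M *m x) j 0.
Proof. by rewrite -mulmxA trmx_delta -rowE mxE. Qed.

Lemma wnorm_id (u : 'cV[R]_d) : enorm u ^+ 2 = wnorm2 1 u.
Proof.
rewrite /enorm sqr_sqrtr; last first.
  by apply: sumr_ge0 => i _; apply: sumr_ge0 => j _; exact: sqr_ge0.
rewrite /wnorm2 mulmx1 mxE; apply: eq_bigr => i _.
by rewrite big_ord1 mxE expr2.
Qed.

Lemma wnorm_Phi r (Phi : 'M[R]_(d, r)) (u : 'cV[R]_d) :
  enorm (Phi^T *m u) ^+ 2 = wnorm2 (Phi *m Phi^T) u.
Proof.
rewrite /enorm sqr_sqrtr; last first.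
  by apply: sumr_ge0 => i _; apply: sumr_ge0 => j _; exact: sqr_ge0.
rewrite /wnorm2 !mulmxA -[u^T *m Phi]trmxK trmx_mul trmxK -mulmxA mxE.
apply: eq_bigr => i _; rewrite big_ord1 expr2; congr (_ * _); by rewrite !mxE.
Qed.

Lemma gradL n (G : 'M[R]_n) (y : 'cV[R]_n) (F : 'cV[R]_d -> 'cV[R]_n) x :
  G^T = G -> differentiable F x ->
  grad (L_map G y F) x = - ((jac F x)^T *m invmx G *m (y - F x)) + x.
Proof.
move=> GT dF.
have GiT : (invmx G)^T = invmx G by rewrite trmx_inv GT.
have dw : differentiable (cst y - F) x.
  by apply: differentiableB => //; exact: differentiable_cst.
have did : differentiable (@id 'cV[R]_d) x by [].
have E : L_map G y F = (2^-1 \*: (fun z => wnorm2 (invmx G) ((cst y - F) z)))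
                     + (2^-1 \*: (fun z => wnorm2 1 (id z))).
  by rewrite funeqE => z; rewrite /L_map wnorm_id.
apply/matrixP => j k; rewrite (ord1 k) /grad [LHS]mxE E.
have q1 := dquad (delta_mx j 0 : 'cV[R]_d) GiT dw.
have q2 := dquad (delta_mx j 0 : 'cV[R]_d) (trmx1 _ _) did.
rewrite deriveD; [|exact: derivableZ q1.1|exact: derivableZ q2.1].
rewrite !deriveZ; try (exact: q1.1); try (exact: q2.1).
have dd : 'D_(delta_mx j 0) (cst y - F) x = - 'D_(delta_mx j 0) F x.
  rewrite deriveB.
  - by rewrite derive_cst sub0r.
  - exact: derivable_cst.
  - by apply: diff_derivable.
have h2 : forall a : R, 2^-1 *: (2 * a) = a.
  move=> a; change (2^-1 * (2 * a) = a); by rewrite mulrA mulVf ?mul1r // pnatr_eq0.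
rewrite q1.2 q2.2 dd derive_id !h2 raddfN /= !mulNmx [in LHS]mxE.
rewrite Jcol // dxq mul1mx [RHS]mxE [in RHS]mxE.
by [].
Qed.

Lemma gradLh n r (G : 'M[R]_n) (y : 'cV[R]_n) (F : 'cV[R]_d -> 'cV[R]_n)
  (Phi : 'M[R]_(d, r)) x :
  G^T = G -> differentiable F x ->
  grad (L_hat_map G y F Phi) x =
    - ((jac F x)^T *m invmx G *m (y - F x)) + (Phi *m Phi^T) *m x.
Proof.
move=> GT dF.
have GiT : (invmx G)^T = invmx G by rewrite trmx_inv GT.
have PT : (Phi *m Phi^T)^T = Phi *m Phi^T by rewrite trmx_mul trmxK.
have dw : differentiable (cst y - F) x.
  by apply: differentiableB => //; exact: differentiable_cst.
have did : differentiable (@id 'cV[R]_d) x by [].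
have E : L_hat_map G y F Phi =
     (2^-1 \*: (fun z => wnorm2 (invmx G) ((cst y - F) z)))
   + (2^-1 \*: (fun z => wnorm2 (Phi *m Phi^T) (id z))).
  by rewrite funeqE => z; rewrite /L_hat_map wnorm_Phi.
apply/matrixP => j k; rewrite (ord1 k) /grad [LHS]mxE E.
have q1 := dquad (delta_mx j 0 : 'cV[R]_d) GiT dw.
have q2 := dquad (delta_mx j 0 : 'cV[R]_d) PT did.
rewrite deriveD; [|exact: derivableZ q1.1|exact: derivableZ q2.1].
rewrite !deriveZ; try (exact: q1.1); try (exact: q2.1).
have dd : 'D_(delta_mx j 0) (cst y - F) x = - 'D_(delta_mx j 0) F x.
  rewrite deriveB.
  - by rewrite derive_cst sub0r.
  - exact: derivable_cst.
  - by apply: diff_derivable.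
have h2 : forall a : R, 2^-1 *: (2 * a) = a.
  move=> a; change (2^-1 * (2 * a) = a); by rewrite mulrA mulVf ?mul1r // pnatr_eq0.
rewrite q1.2 q2.2 dd derive_id !h2 raddfN /= !mulNmx [in LHS]mxE.
rewrite Jcol // dxq [RHS]mxE [in RHS]mxE.
by [].
Qed.

End Der.

Arguments enormM {R m k p}. Arguments enormD {R m k}. Arguments enormBle {R m k}.
Arguments enorm_ge0 {R m k}. Arguments enormB {R m k}. Arguments enormN {R m k}.
Arguments enorm_tr {R m k}.
Arguments gradL {R d n G y F x}. Arguments gradLh {R d n r G y F Phi x}.

Section Aux.
Variable R : realType.

Lemma enorm0 m k : enorm (0 : 'M[R]_(m, k)) = 0.
Proof.
rewrite /enorm big1 ?sqrtr0 // => i _; rewrite big1 // => j _.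
by rewrite mxE expr0n.
Qed.

Lemma splitA n d (K K' : 'M[R]_(n, d)) (B : 'M[R]_n) (y a b : 'cV[R]_n) :
  (K - K')^T *m B *m (y - a) + K'^T *m B *m (b - a) =
  K^T *m B *m (y - a) - K'^T *m B *m (y - b).
Proof.
have -> : (K - K')^T = K^T - K'^T by apply/matrixP => i j; rewrite !mxE.
rewrite !mulmxBl !mulmxBr.
apply/matrixP => i j; rewrite !mxE; ring.
Qed.

Lemma splitB n d (K K' : 'M[R]_(n, d)) (B : 'M[R]_n) (y a b : 'cV[R]_n) :
  (K - K')^T *m B *m (y - b) + K^T *m B *m (b - a) =
  K^T *m B *m (y - a) - K'^T *m B *m (y - b).
Proof.
have -> : (K - K')^T = K^T - K'^T by apply/matrixP => i j; rewrite !mxE.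
rewrite !mulmxBl !mulmxBr.
apply/matrixP => i j; rewrite !mxE; ring.
Qed.

Lemma bound3 n d (K : 'M[R]_(n, d)) (B : 'M[R]_n) (u : 'cV[R]_n) k b :
  enorm K <= k -> enorm u <= b -> enorm (K^T *m B *m u) <= k * enorm B * b.
Proof.
move=> hK hu.
apply: (le_trans (enormM _ _)).
apply: ler_pM; rewrite ?enorm_ge0 //.
apply: (le_trans (enormM _ _)); rewrite enorm_tr.
by apply: ler_pM; rewrite ?enorm_ge0.
Qed.

Lemma tri5 m k (a b c d e : 'M[R]_(m, k)) :
  enorm (a + b - c + (d + e)) <= enorm a + enorm b + enorm c + (enorm d + enorm e).
Proof.
apply: (le_trans (enormD _ _)); apply: lerD; last exact: enormD.
apply: (le_trans (enormBle _ _)); apply: lerD => //; exact: enormD.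
Qed.

End Aux.
Arguments bound3 {R n d K} B {u k b}.
Arguments enorm0 {R m k}.

Theorem theorem1 (R : realType) (d n r : nat)
  (Gnoise : 'M[R]_n) (y : 'cV[R]_n)
  (F Fh : 'cV[R]_d -> 'cV[R]_n)
  (Phi : 'M[R]_(d, r))
  (etas etahs : 'cV[R]_d)
  (Rad ch eps1 eps2 eps3 : R)
  (delta deltah : 'cV[R]_d -> 'M[R]_d) :
  (* Gamma_noise symmetric positive definite *)
  Gnoise^T = Gnoise ->
  (forall v : 'cV[R]_n, v != 0 -> 0 < (v^T *m Gnoise *m v) 0 0) ->
  (* F, Fhat differentiable *)
  (forall x, differentiable F x) ->
  (forall x, differentiable Fh x) ->
  (* Phi with orthonormal columns, r <= d *)
  (r <= d)%N ->
  Phi^T *m Phi = 1%:M ->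
  let L := L_map Gnoise y F in
  let Lh := L_hat_map Gnoise y Fh Phi in
  let Pr := Phi *m Phi^T in
  (* stationary points *)
  grad L etas = 0 ->
  grad Lh etahs = 0 ->
  Pr *m etahs = etahs ->
  0 < Rad ->
  (* (A1) *)
  differentiable (grad L) etas ->
  differentiable (grad Lh) etahs ->
  enorm (delta x) @[x --> etas^'] --> 0 ->
  enorm (deltah x) @[x --> etahs^'] --> 0 ->
  (forall x, enorm (x - etas) <= Rad ->
     grad L x = grad L etas + hess L etas *m (x - etas) + delta x *m (x - etas)) ->
  (forall x, enorm (x - etahs) <= Rad ->
     grad Lh x = grad Lh etahs + hess Lh etahs *m (x - etahs)
                 + deltah x *m (x - etahs)) ->
  0 < ch ->
  enorm ((hess Lh etahs + hess L etas) *m (etas - etahs)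
         + (deltah etas + delta etahs) *m (etas - etahs))
    >= ch * enorm (etas - etahs) ->
  (* (A2) *)
  0 < eps1 -> 0 < eps2 ->
  (forall x, enorm (x - etas) <= Rad \/ enorm (x - etahs) <= Rad ->
     enorm (F x - Fh x) <= eps1 /\ enorm (jac F x - jac Fh x) <= eps2) ->
  (* (A3) *)
  0 < eps3 ->
  enorm ((1%:M - Pr) *m etas) <= eps3 ->
  (* conclusion *)
  enorm (etas - etahs) <= Rad ->
  let c1 := enorm (invmx Gnoise) * (enorm (jac Fh etas) + enorm (jac F etahs)) / ch in
  let c2 := enorm (invmx Gnoise) * (2 * enorm y + enorm (F etas) + enorm (Fh etahs)) / ch in
  let c3 := 1 / ch in
  enorm (etas - etahs) <= c1 * eps1 + c2 * eps2 + c3 * eps3.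
Proof.
move=> GT _ dF dFh _ _ L Lh Pr gL0 gLh0 Preta Rad0 _ _ _ _ TL TLh ch0 Hch _ _ A2 _ A3 eR.
cbv zeta.
have fLs : grad L etas = - ((jac F etas)^T *m invmx Gnoise *m (y - F etas)) + etas
  := gradL GT (dF etas).
have fLh : grad L etahs = - ((jac F etahs)^T *m invmx Gnoise *m (y - F etahs)) + etahs
  := gradL GT (dF etahs).
have fLhs : grad Lh etas = - ((jac Fh etas)^T *m invmx Gnoise *m (y - Fh etas)) + Pr *m etas
  := gradLh GT (dFh etas).
have fLhh : grad Lh etahs = - ((jac Fh etahs)^T *m invmx Gnoise *m (y - Fh etahs)) + Pr *m etahs
  := gradLh GT (dFh etahs).
clearbody L Lh Pr.
set e := etas - etahs.
have eR' : enorm (etahs - etas) <= Rad by rewrite enormB.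
have T1 := TLh etas eR.
have T2 := TL etahs eR'.
rewrite gLh0 add0r in T1.
rewrite gL0 add0r -opprB -/e !mulmxN in T2.
have key : grad Lh etas - grad L etahs =
  (hess Lh etahs + hess L etas) *m e + (deltah etas + delta etahs) *m e.
  by rewrite T1 T2 opprD !opprK !mulmxDl addrACA.
rewrite -key in Hch.
set G' := invmx Gnoise in fLs fLh fLhs fLhh *.
set Js := jac F etas in fLs *. set Jhs := jac Fh etas in fLhs *.
set Jh := jac F etahs in fLh *. set Jhh := jac Fh etahs in fLhh *.
have E1 : Js^T *m G' *m (y - F etas) = etas.
  have h := fLs; rewrite gL0 in h; move/eqP: h.
  by rewrite eq_sym addrC subr_eq0 => /eqP h; rewrite -h.
have E2 : Jhh^T *m G' *m (y - Fh etahs) = etahs.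
  have h := fLhh; rewrite gLh0 Preta in h; move/eqP: h.
  by rewrite eq_sym addrC subr_eq0 => /eqP h; rewrite -h.
have ZA : grad Lh etas - grad L etahs =
   ((Js - Jhs)^T *m G' *m (y - F etas) + Jhs^T *m G' *m (Fh etas - F etas))
   - (1%:M - Pr) *m etas
   + ((Jh - Jhh)^T *m G' *m (y - Fh etahs) + Jh^T *m G' *m (Fh etahs - F etahs)).
  rewrite splitA splitB E1 E2 mulmxBl mul1mx fLhs fLh.
  apply/matrixP => i j; rewrite !mxE; ring.
rewrite ZA in Hch.
have Rs : enorm (etas - etas) <= Rad by rewrite subrr enorm0 ltW.
have Rh : enorm (etahs - etahs) <= Rad by rewrite subrr enorm0 ltW.
have [As1 As2] := A2 etas (or_introl Rs).
have [Ah1 Ah2] := A2 etahs (or_intror Rh).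
rewrite -/Js -/Jhs in As2. rewrite -/Jh -/Jhh in Ah2.
have b1 := bound3 G' As2 (enormBle y (F etas)).
have hFs : enorm (Fh etas - F etas) <= eps1 by rewrite enormB.
have hFh : enorm (Fh etahs - F etahs) <= eps1 by rewrite enormB.
have b2 := bound3 G' (lexx (enorm Jhs)) hFs.
have b3 := bound3 G' Ah2 (enormBle y (Fh etahs)).
have b4 := bound3 G' (lexx (enorm Jh)) hFh.
clearbody G' Js Jhs Jh Jhh.
have tri := @tri5 _ _ _ ((Js - Jhs)^T *m G' *m (y - F etas)) (Jhs^T *m G' *m (Fh etas - F etas))
   ((1%:M - Pr) *m etas) ((Jh - Jhh)^T *m G' *m (y - Fh etahs)) (Jh^T *m G' *m (Fh etahs - F etahs)).
have g0 := @enorm_ge0 _ _ _ G'.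
have ech : ch * (enorm G' * (enorm Jhs + enorm Jh) / ch * eps1 +
  enorm G' * (2 * enorm y + enorm (F etas) + enorm (Fh etahs)) / ch * eps2 +
  1 / ch * eps3) = enorm G' * (enorm Jhs + enorm Jh) * eps1 +
  enorm G' * (2 * enorm y + enorm (F etas) + enorm (Fh etahs)) * eps2 + eps3.
  field. by rewrite gt_eqF.
have H := le_trans Hch tri. rewrite -/e in H.
have fin : ch * enorm e <= ch * (enorm G' * (enorm Jhs + enorm Jh) / ch * eps1 +
  enorm G' * (2 * enorm y + enorm (F etas) + enorm (Fh etahs)) / ch * eps2 +
  1 / ch * eps3).
  rewrite ech. lra.
by move: fin; rewrite ler_pM2l.
Qed.
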